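(* Let $L_1,\dots,L_n\subset\mathbb{C}^2$ be $n\ge3$ distinct complex lines through the origin and let $a_1,\dots,a_n\in\mathbb{C}\setminus\{0\}$. The set of all standard connections with poles along $L_1,\dots,L_n$ and residue traces $\operatorname{tr}A_i=a_i$ is a complex affine space of dimension $n-3$.
   Context: With $\ell_i$ defining linear forms of $L_i$, a standard connection is a connection on $T\mathbb{C}^2$ (away from the lines) of the form $\nabla=d-\sum_iA_i\frac{d\ell_i}{\ell_i}$ in the frame $\partial_z,\partial_w$, where the $A_i$ are non-zero constant complex $2\times2$ matrices with $\ker A_i=L_i$ for all $i$ and $\sum_iA_i=c\cdot\mathrm{Id}$ for some $c\in\mathbb{C}$. Such a connection is determined by the tuple $(A_1,\dots,A_n)$. *)

(* Defs.v *)
From HB Require Import structures.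
From mathcomp Require Import all_boot all_order all_algebra.
From mathcomp Require Import reals complex.
Set Implicit Arguments. Unset Strict Implicit. Unset Printing Implicit Defensive.
Import Order.TTheory GRing.Theory Num.Theory.
Local Open Scope ring_scope.

Notation CC R := (complex R).

(* kernel of the 2x2 matrix A, acting on column vectors (coordinates in the
   frame d/dz, d/dw), equals the subspace L *)
Definition ker_eq {K : fieldType} (A : 'M[K]_2) (L : {vspace 'cV[K]_2}) : Prop :=
  forall v : 'cV[K]_2, A *m v = 0 <-> v \in L.

Definition standard_connection_data {K : fieldType} (n : nat)
    (L : 'I_n -> {vspace 'cV[K]_2}) (a : 'I_n -> K)
    (A : {ffun 'I_n -> 'M[K]_2}) : Prop :=
  (forall i, A i != 0) /\
  (forall i, ker_eq (A i) (L i)) /\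
  (exists c : K, \sum_(i < n) A i = c%:M) /\
  (forall i, \tr (A i) = a i).

Definition affine_space_of_dim {K : fieldType} (V : vectType K) (S : V -> Prop)
    (d : nat) : Prop :=
  exists (P : V) (U : {vspace V}),
    \dim U = d /\ forall x : V, S x <-> (x - P) \in U.

(* Main.v *)
Require Import Defs.
From HB Require Import structures.
From mathcomp Require Import all_boot all_order all_algebra.
From mathcomp Require Import reals complex.
From mathcomp Require Import ring.
Import Order.TTheory GRing.Theory Num.Theory.
Local Open Scope ring_scope.

Section S.
Context {K : fieldType}.
Lemma trE (A : 'M[K]_2) : \tr A = A 0 0 + A 1 1.
Proof. rewrite /mxtrace !big_ord_recl big_ord0 addr0. by congr (A _ _ + A _ _); apply: val_inj. Qed.
Lemma mulE (A : 'M[K]_2) (w : 'cV[K]_2) i : (A *m w) i 0 = A i 0 * w 0 0 + A i 1 * w 1 0.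
Proof. rewrite !mxE !big_ord_recl big_ord0 addr0. by congr (A _ _ * w _ _ + A _ _ * w _ _); apply: val_inj. Qed.
Lemma I2P (i : 'I_2) : i = 0 \/ i = 1.
Proof. by case: i => [[|[|//]] ?]; [left|right]; apply: val_inj. Qed.
Lemma mx2P (A B : 'M[K]_2) : A 0 0 = B 0 0 -> A 0 1 = B 0 1 -> A 1 0 = B 1 0 -> A 1 1 = B 1 1 -> A = B.
Proof. move=> *; apply/matrixP => i j.
by case: (I2P i) => ->; case: (I2P j) => ->.
Qed.
Lemma cV2P (v w : 'cV[K]_2) : v 0 0 = w 0 0 -> v 1 0 = w 1 0 -> v = w.
Proof. move=> *; apply/matrixP => i j; rewrite [j]ord1.
by case: (I2P i) => ->.
Qed.
Lemma cV2_neq0 (v : 'cV[K]_2) : v != 0 -> v 0 0 != 0 \/ v 1 0 != 0.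
Proof.
move=> hv; case: (eqVneq (v 0 0) 0) => h0; last by left.
case: (eqVneq (v 1 0) 0) => h1; last by right.
by case/eqP: hv; apply: cV2P; rewrite mxE.
Qed.

Definition Nm (v : 'cV[K]_2) : 'M[K]_2 :=
  \matrix_(i, j) (v i 0 * (if j == 0 then - v 1 0 else v 0 0)).
Definition dd (v w : 'cV[K]_2) : K := v 0 0 * w 1 0 - v 1 0 * w 0 0.

Lemma NmE v : [/\ Nm v 0 0 = - (v 0 0 * v 1 0), Nm v 0 1 = v 0 0 ^+ 2,
  Nm v 1 0 = - (v 1 0 ^+ 2) & Nm v 1 1 = v 1 0 * v 0 0].
Proof. rewrite !mxE /=; split; ring. Qed.

Lemma Nm_ker v : Nm v *m v = 0.
Proof.
have [e00 e01 e10 e11] := NmE v.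
by apply: cV2P; rewrite !mulE ?e00 ?e01 ?e10 ?e11 mxE; ring.
Qed.

Lemma Nm_tr v : \tr (Nm v) = 0.
Proof. have [e00 e01 e10 e11] := NmE v. rewrite trE e00 e11; ring. Qed.

Lemma Nm_neq0 v : v != 0 -> Nm v != 0.
Proof.
have [e00 e01 e10 e11] := NmE v.
case/cV2_neq0 => h; apply/eqP => /matrixP hN.
  by move: (hN 0 1); rewrite e01 mxE; apply/eqP; rewrite expf_neq0.
by move: (hN 1 0); rewrite e10 mxE; apply/eqP; rewrite oppr_eq0 expf_neq0.
Qed.

Lemma line_mem (v w : 'cV[K]_2) : v != 0 -> dd v w = 0 -> w \in <[v]>%VS.
Proof.
rewrite /dd => hv hd; apply/vlineP.
case/cV2_neq0: hv => h.
  exists (w 0 0 / v 0 0); apply: cV2P; rewrite !mxE; first by field.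
  apply/eqP; rewrite -subr_eq0.
  rewrite (_ : _ - _ = (v 0 0 * w 1 0 - v 1 0 * w 0 0) / v 0 0); last by field.
  by rewrite hd mul0r.
exists (w 1 0 / v 1 0); apply: cV2P; rewrite !mxE; last by field.
apply/eqP; rewrite -subr_eq0.
rewrite (_ : _ - _ = - (v 0 0 * w 1 0 - v 1 0 * w 0 0) / v 1 0); last by field.
by rewrite hd oppr0 mul0r.
Qed.

Lemma ker_line (A : 'M[K]_2) (v : 'cV[K]_2) : v != 0 -> A != 0 -> A *m v = 0 ->
  ker_eq A <[v]>%VS.
Proof.
move=> hv hA hAv w; split; last first.
  by case/vlineP => k ->; rewrite -scalemxAr hAv scaler0.
move=> hAw; apply: line_mem hv _; case: (eqVneq (dd v w) 0) => // hd; case/eqP: hA.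
have ev r : A r 0 * v 0 0 + A r 1 * v 1 0 = 0 by rewrite -mulE hAv mxE.
have ew r : A r 0 * w 0 0 + A r 1 * w 1 0 = 0 by rewrite -mulE hAw mxE.
have k r : A r 0 = 0 /\ A r 1 = 0.
  split; apply: (mulIf hd); rewrite mul0r /dd.
    rewrite (_ : A r 0 * _ = w 1 0 * (A r 0 * v 0 0 + A r 1 * v 1 0) - v 1 0 * (A r 0 * w 0 0 + A r 1 * w 1 0)); last by ring.
    by rewrite ev ew; ring.
  rewrite (_ : A r 1 * _ = v 0 0 * (A r 0 * w 0 0 + A r 1 * w 1 0) - w 0 0 * (A r 0 * v 0 0 + A r 1 * v 1 0)); last by ring.
  by rewrite ev ew; ring.
apply/matrixP => i j; rewrite mxE.
by case: (k i) => h0 h1; case: (I2P j) => ->.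
Qed.

Lemma alg_p (p q y00 y01 y10 y11 : K) : p != 0 ->
  y00 * p + y01 * q = 0 -> y10 * p + y11 * q = 0 -> y00 + y11 = 0 ->
  [/\ y00 = y01 / p^+2 * -(p * q), y01 = y01 / p^+2 * p^+2,
      y10 = y01 / p^+2 * -(q^+2) & y11 = y01 / p^+2 * (q * p)].
Proof.
move=> hp E1 E2 E3; split; apply/eqP; rewrite -subr_eq0.
- rewrite (_ : _ - _ = (y00 * p + y01 * q) / p); last by field.
  by rewrite E1 mul0r.
- by rewrite (_ : _ - _ = 0) //; field.
- rewrite (_ : _ - _ = (p * (y10 * p + y11 * q) - p * q * (y00 + y11) + q * (y00 * p + y01 * q)) / p^+2); last by field.
  by rewrite E1 E2 E3; rewrite !mulr0 subrr addr0 mul0r.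
- rewrite (_ : _ - _ = (y00 + y11) - (y00 * p + y01 * q) / p); last by field.
  by rewrite E1 E3 mul0r subrr.
Qed.

Lemma alg_q (q y00 y01 y10 y11 : K) : q != 0 ->
  y00 * 0 + y01 * q = 0 -> y10 * 0 + y11 * q = 0 -> y00 + y11 = 0 ->
  [/\ y00 = - y10 / q^+2 * -(0 * q), y01 = - y10 / q^+2 * 0^+2,
      y10 = - y10 / q^+2 * -(q^+2) & y11 = - y10 / q^+2 * (q * 0)].
Proof.
move=> hq E1 E2 E3; split; apply/eqP; rewrite -subr_eq0.
- rewrite (_ : _ - _ = (y00 + y11) - (y10 * 0 + y11 * q) / q); last by field.
  by rewrite E2 E3 mul0r subrr.
- rewrite (_ : _ - _ = (y00 * 0 + y01 * q) / q); last by field.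
  by rewrite E1 mul0r.
- by rewrite (_ : _ - _ = 0) //; field.
- rewrite (_ : _ - _ = (y10 * 0 + y11 * q) / q); last by field.
  by rewrite E2 mul0r.
Qed.

Lemma decomp (v : 'cV[K]_2) (y : 'M[K]_2) : v != 0 -> y *m v = 0 -> \tr y = 0 ->
  exists t, y = t *: Nm v.
Proof.
move=> hv hyv; rewrite trE => E3.
have E1 : y 0 0 * v 0 0 + y 0 1 * v 1 0 = 0 by rewrite -mulE hyv mxE.
have E2 : y 1 0 * v 0 0 + y 1 1 * v 1 0 = 0 by rewrite -mulE hyv mxE.
have [e00 e01 e10 e11] := NmE v.
case: (eqVneq (v 0 0) 0) => hp.
  have hq : v 1 0 != 0 by case/cV2_neq0: hv => //; rewrite hp eqxx.
  rewrite hp in E1 E2 e00 e01 e11.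
  have [f00 f01 f10 f11] := alg_q _ _ _ _ _ hq E1 E2 E3.
  by exists (- y 1 0 / v 1 0 ^+ 2); apply: mx2P; rewrite mxE ?e00 ?e01 ?e10 ?e11.
have [f00 f01 f10 f11] := alg_p _ _ _ _ _ _ hp E1 E2 E3.
by exists (y 0 1 / v 0 0 ^+ 2); apply: mx2P; rewrite mxE ?e00 ?e01 ?e10 ?e11.
Qed.

Definition mk2 (a b c d : K) : 'M[K]_2 := \matrix_(i, j)
  (if i == 0 then (if j == 0 then a else b) else (if j == 0 then c else d)).

Lemma E_exists (v : 'cV[K]_2) : v != 0 -> exists E : 'M[K]_2, E *m v = 0 /\ \tr E = 1.
Proof.
case/cV2_neq0 => h.
  exists (mk2 0 0 (- v 1 0 / v 0 0) 1); split.
    by apply: cV2P; rewrite !mulE !mxE /=; field.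
  by rewrite trE !mxE /= add0r.
exists (mk2 1 (- v 0 0 / v 1 0) 0 0); split.
  by apply: cV2P; rewrite !mulE !mxE /=; field.
by rewrite trE !mxE /= addr0.
Qed.

Lemma indep_core (v0 v1 v2 : 'cV[K]_2) t0 t1 t2 :
  t0 *: Nm v0 + t1 *: Nm v1 + t2 *: Nm v2 = 0 -> t0 * (dd v0 v1 * dd v0 v2) = 0.
Proof.
move=> hM.
have e : t0 * (dd v0 v1 * dd v0 v2) =
  v1 1 0 * v2 1 0 * (t0 *: Nm v0 + t1 *: Nm v1 + t2 *: Nm v2) 0 1
  - v1 0 0 * v2 0 0 * (t0 *: Nm v0 + t1 *: Nm v1 + t2 *: Nm v2) 1 0
  + (v1 0 0 * v2 1 0 + v2 0 0 * v1 1 0) * (t0 *: Nm v0 + t1 *: Nm v1 + t2 *: Nm v2) 0 0.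
  by rewrite /dd !mxE /=; ring.
by rewrite e hM !mxE; ring.
Qed.

Arguments indep_core {v0 v1 v2 t0 t1 t2}.
Lemma dd_swap (v w : 'cV[K]_2) : dd w v = - dd v w.
Proof. rewrite /dd; ring. Qed.

Lemma indep3 (v0 v1 v2 : 'cV[K]_2) t0 t1 t2 :
  dd v0 v1 != 0 -> dd v0 v2 != 0 -> dd v1 v2 != 0 ->
  t0 *: Nm v0 + t1 *: Nm v1 + t2 *: Nm v2 = 0 -> [/\ t0 = 0, t1 = 0 & t2 = 0].
Proof.
move=> h01 h02 h12 hM; split.
- by move/eqP: (indep_core hM); rewrite !mulf_eq0 (negbTE h01) (negbTE h02) !orbF => /eqP.
- have hM' : t1 *: Nm v1 + t0 *: Nm v0 + t2 *: Nm v2 = 0 by rewrite (addrC (t1 *: _)).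
  move/eqP: (indep_core hM'); rewrite (dd_swap v0 v1).
  by rewrite !mulf_eq0 oppr_eq0 (negbTE h01) (negbTE h12) !orbF => /eqP.
- have hM' : t2 *: Nm v2 + t0 *: Nm v0 + t1 *: Nm v1 = 0.
    by rewrite -addrA addrC.
  move/eqP: (indep_core hM'); rewrite (dd_swap v0 v2) (dd_swap v1 v2).
  by rewrite !mulf_eq0 !oppr_eq0 (negbTE h02) (negbTE h12) !orbF => /eqP.
Qed.
End S.

Definition psif (K : fieldType) n (N : 'I_n -> 'M[K]_2) (t : 'rV[K]_n) : 'M[K]_2 :=
  \sum_i t 0 i *: N i.
Fact psif_lin (K : fieldType) n (N : 'I_n -> 'M[K]_2) : linear (@psif K n N).
Proof.
move=> k x y; rewrite /psif scaler_sumr -big_split; apply: eq_bigr => i _.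
by rewrite !mxE scalerDl scalerA.
Qed.
HB.instance Definition _ (K : fieldType) n (N : 'I_n -> 'M[K]_2) :=
  GRing.isLinear.Build K 'rV[K]_n 'M[K]_2 _ (@psif K n N) (@psif_lin K n N).

Definition Phif (K : fieldType) n (N : 'I_n -> 'M[K]_2) (t : 'rV[K]_n) :
  {ffun 'I_n -> 'M[K]_2} := [ffun i => t 0 i *: N i].
Fact Phif_lin (K : fieldType) n (N : 'I_n -> 'M[K]_2) : linear (@Phif K n N).
Proof.
move=> k x y; apply/ffunP => i; rewrite /Phif !ffunE !mxE.
by rewrite scalerDl scalerA.
Qed.
HB.instance Definition _ (K : fieldType) n (N : 'I_n -> 'M[K]_2) :=
  GRing.isLinear.Build K 'rV[K]_n {ffun 'I_n -> 'M[K]_2} _ (@Phif K n N) (@Phif_lin K n N).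

Lemma ffD (I : finType) (M : zmodType) (f g : {ffun I -> M}) i : (f + g) i = f i + g i.
Proof. by rewrite !ffunE. Qed.
Lemma ffB (I : finType) (M : zmodType) (f g : {ffun I -> M}) i : (f - g) i = f i - g i.
Proof. by rewrite !ffunE. Qed.

Theorem lemma10 (R : realType) (n : nat) (L : 'I_n -> {vspace 'cV[CC R]_2})
    (a : 'I_n -> CC R) :
  (3 <= n)%N ->
  (forall i, \dim (L i) = 1%N) ->
  injective L ->
  (forall i, a i != 0) ->
  affine_space_of_dim
    (V := {ffun 'I_n -> 'M[CC R]_2})
    (standard_connection_data L a) (n - 3)%N.
Proof.
move=> hn hdim hinj ha.
pose v i := vpick (L i).
have hv0 i : v i != 0.
  by rewrite vpick0; apply/eqP => h; move: (hdim i); rewrite h dimv0.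
have hLv i : L i = <[v i]>%VS.
  by apply/esym/eqP; rewrite eqEdim -memvE memv_pick hdim dim_vline hv0.
have hdd i j : i != j -> dd (v i) (v j) != 0.
  move=> hij; apply/eqP => hd; move/eqP: hij; apply; apply: hinj.
  have hm := @line_mem _ (v i) (v j) (hv0 i) hd.
  by rewrite !hLv; apply/esym/eqP; rewrite eqEdim -memvE hm !dim_vline !hv0.
pose N i := Nm (v i).
have [E hE] := fin_all_exists (fun i => @E_exists _ (v i) (hv0 i)).
pose psi := linfun (@psif _ n N).
have psiE t : psi t = @psif _ n N t by rewrite lfunE.
pose Phi := linfun (@Phif _ n N).
have PhiE t : Phi t = @Phif _ n N t by rewrite lfunE.
have h0 : (0 < n)%N by apply: leq_trans hn.
have h1 : (1 < n)%N by apply: leq_trans hn.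
pose j0 := Ordinal h0. pose j1 := Ordinal h1. pose j2 := Ordinal hn.
have I3 (i : 'I_3) : [\/ i = ord0, i = lift ord0 ord0 | i = lift ord0 (lift ord0 ord0)].
  by case: i => [[|[|[|//]]] ?]; [apply: Or31|apply: Or32|apply: Or33]; apply: val_inj.
have hfree : free [tuple N j0; N j1; N j2].
  apply/freeP => k hk.
  rewrite !big_ord_recl big_ord0 addr0 /= addrA in hk.
  have [k0 k1 k2] := @indep3 _ (v j0) (v j1) (v j2) _ _ _ (hdd j0 j1 isT) (hdd j0 j2 isT) (hdd j1 j2 isT) hk.
  by move=> i; case: (I3 i) => ->.
have h3 : \dim <<[tuple N j0; N j1; N j2]>> = 3%N by apply/eqP.
have psiN j : psi (delta_mx 0 j) = N j.
  rewrite psiE /psif (bigD1 j) //= big1 => [|i hij].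
    by rewrite !mxE !eqxx /= scale1r addr0.
  by rewrite !mxE eqxx (negbTE hij) /= scale0r.
have hsub : (<<[tuple N j0; N j1; N j2]>> <= limg psi)%VS.
  apply/span_subvP => M; rewrite !inE.
  by move=> /orP [/eqP -> | /orP [/eqP -> | /eqP ->]]; rewrite -psiN; apply: memv_img (memvf _).
have h1n : (1%:M : 'M[CC R]_2) \notin limg psi.
  apply/negP => /memv_imgP [t _ ht].
  have := congr1 mxtrace ht.
  rewrite psiE /psif linear_sum big1 => [|i _]; last by rewrite linearZ /= Nm_tr mulr0.
  by rewrite mxtrace1 => /eqP; rewrite pnatr_eq0.
have hcap : (limg psi :&: <[1%:M]>)%VS = 0%VS.
  apply/eqP; rewrite -subv0; apply/subvP => z; rewrite memv_cap memv0 => /andP [hz /vlineP [k hk]].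
  case: (eqVneq k 0) => hk0; first by rewrite hk hk0 scale0r.
  case/negP: h1n; rewrite (_ : 1%:M = k^-1 *: z); first exact: memvZ.
  by rewrite hk scalerA mulVf // scale1r.
have hone : (1%:M : 'M[CC R]_2) != 0 := oner_neq0 _.
have hdpsi : \dim (limg psi) = 3%N.
  apply/eqP; rewrite eqn_leq; apply/andP; split; last by rewrite -{1}h3 dimvS.
  have := dimvS (subvf (limg psi + <[1%:M]>)%VS).
  by rewrite dimv_disjoint_sum // dim_vline hone dimvf /= dim_matrix addn1 ltnS.
have hfull : (limg psi + <[1%:M]>)%VS = fullv.
  apply/eqP; rewrite eqEdim subvf /= dimv_disjoint_sum // hdpsi dim_vline hone dimvf /=.
  by rewrite dim_matrix.
have : (\sum_i a i *: E i) \in (limg psi + <[1%:M]>)%VS by rewrite hfull memvf.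
case/memv_addP => w /memv_imgP [tau _ ->] [z /vlineP [lam ->] hM].
pose P : {ffun 'I_n -> 'M[CC R]_2} := [ffun i => a i *: E i - tau 0 i *: N i].
have hPv i : P i *m v i = 0.
  by rewrite ffunE mulmxBl -!scalemxAl (hE i).1 /N Nm_ker !scaler0 subrr.
have hPtr i : \tr (P i) = a i.
  by rewrite ffunE linearB !linearZ /= (hE i).2 /N Nm_tr mulr1 ?oppr0 ?scaler0 ?mulr0 ?addr0 ?subr0.
have hPsum : \sum_i P i = lam%:M.
  rewrite (eq_bigr (fun i => a i *: E i - tau 0 i *: N i)) => [|i _]; last by rewrite ffunE.
  by rewrite sumrB hM psiE /psif addrAC subrr add0r scalemx1.
have hker0 : lker Phi = 0%VS.
  apply/eqP/lker0P => t t' h; apply/rowP => i.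
  have := congr1 (fun f : {ffun 'I_n -> 'M[CC R]_2} => f i) h; rewrite !PhiE !ffunE => /eqP.
  rewrite -subr_eq0 -scalerBl scaler_eq0 (negbTE (@Nm_neq0 _ (v i) (hv0 i))) orbF subr_eq0.
  by move/eqP.
exists P, (Phi @: lker psi)%VS; split.
  rewrite limg_dim_eq; last by rewrite hker0 capv0.
  have := limg_ker_dim psi fullv; rewrite capfv hdpsi dimvf /= dim_matrix => h.
  by apply/eqP; rewrite -(eqn_add2r 3) subnK // h mul1r.
move=> x; split.
- case=> hx0 [hker [[c hc] htr]].
  have hy i : (x - P) i *m v i = 0 /\ \tr ((x - P) i) = 0.
    rewrite !ffB mulmxBl hPv subr0 linearB /= htr hPtr subrr; split=> //.
    by apply/(hker i (v i)); rewrite hLv memv_line.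
  have [t ht] := fin_all_exists (fun i => @decomp _ (v i) ((x - P) i) (hv0 i) (hy i).1 (hy i).2).
  pose tau' : 'rV[CC R]_n := \row_i t i.
  have hxPe : x - P = Phi tau'.
    by apply/ffunP => i; rewrite PhiE /Phif [RHS]ffunE /tau' mxE; exact: ht i.
  have hpsi : psi tau' = (c - lam)%:M.
    rewrite psiE /psif (eq_bigr (fun i => x i - P i)) => [|i _]; last first.
      by rewrite mxE -ffB ht.
    by rewrite sumrB hc hPsum raddfB.
  have hcl : c - lam = 0.
    apply/eqP; apply/negPn/negP => hne; case/negP: h1n.
    rewrite (_ : 1%:M = (c - lam)^-1 *: psi tau'); first exact/memvZ/memv_img/memvf.
    by rewrite hpsi scale_scalar_mx mulVf.
  by rewrite hxPe; apply: memv_img; rewrite memv_ker hpsi hcl raddf0.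
- move/memv_imgP => [tau' htau' hxP]; rewrite memv_ker in htau'.
  have hx : x = P + Phi tau' by rewrite -hxP addrC subrK.
  have hxi i : x i = a i *: E i + (tau' 0 i - tau 0 i) *: N i.
    by rewrite hx ffD PhiE /Phif !ffunE scalerBl addrA addrAC.
  have hxv i : x i *m v i = 0.
    by rewrite hxi mulmxDl -!scalemxAl (hE i).1 /N Nm_ker !scaler0 addr0.
  have hxt i : \tr (x i) = a i.
    by rewrite hxi linearD !linearZ /= (hE i).2 /N Nm_tr mulr1 ?oppr0 ?scaler0 ?mulr0 ?addr0.
  have hxn i : x i != 0.
    by apply/eqP => h; move: (hxt i); rewrite h linear0 => /esym/eqP; rewrite (negbTE (ha i)).
  split; first by [].
  split; first by move=> i; rewrite hLv; apply: (@ker_line _ (x i) (v i)).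
  split; last by [].
  exists lam.
  rewrite hx (eq_bigr (fun i => P i + Phi tau' i)) => [|i _]; last by rewrite ffD.
  have hs : \sum_i Phi tau' i = psi tau'.
    by rewrite psiE /psif; apply: eq_bigr => i _; rewrite PhiE /Phif ffunE.
  by rewrite big_split /= hPsum hs (eqP htau') addr0.
Qed.
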